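(* In REFORM with the RPTSC reward scheme with at most $k=2$ pairings, in the setting described in the context, suppose all agents other than $a_i$ play the trustworthy strategy, and suppose Assumption $\mathsf{A}_1$ holds for $a_i$ reporting at time $t_i$: $$\overline{Ref}_i(\alpha)-\alpha\beta(t_i)\ \ge\ c(e_H)-c(e_L).$$ Then $a_i$'s ex-ante expected utility from exerting high effort exceeds that from reporting randomly at the same time: $$\overline{Ref}_i(\alpha)-c(e_H)\ >\ \overline{E}_{ra}-c(e_L),\qquad\text{where } \overline{E}_{ra}=\sum_{y\in\mathcal{X}}p_y\,\alpha r\beta(t_i)(1-p_y)\left(1-(1-p_y)^{n-1}\right).$$
   Context: Setting. In each round there are $n\ge 2$ statistically independent, a-priori similar tasks with common finite answer space $\mathcal{X}$. An agent exerts high effort $e_H$ (cost $c(e_H)$), obtaining an evaluation $x_i\in\mathcal{X}$, or low effort $e_L$ (cost $c(e_L)<c(e_H)$), obtaining no evaluation and reporting randomly according to its prior. Trustworthy strategy: high effort, report the true evaluation. A decay factor $\beta(t)>0$, decreasing in $t$, multiplies rewards. REFORM with RPTSC reward uses a scale $\alpha>0$; utility is reward minus effort cost. Beliefs. $p_x=P_p(x)\in(0,1)$ is the prior probability that a peer's evaluation is $x$, and $p'_x=P_{p|i}(x\mid x_i=x)\in(0,1)$ is the posterior probability that a peer's evaluation is $x$ given that $a_i$'s evaluation is $x$. $r\in[0,1]$ is $a_i$'s belief that a random peer's TERM score is below its own. Ex-ante expected reward of a trustworthy agent (before evaluation, all others trustworthy): $$\overline{Ref}_i(\alpha)=\alpha\beta(t_i)\sum_{x\in\mathcal{X}}p_x\left[\left(\frac{p'_x}{p_x}-1+r\,p'_x\frac{1-p'_x}{p_x}\right)\left(1-(1-p_x)^{n-1}\right)\right].$$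 The expected reward of a random agent reporting $y$ (all others trustworthy) is $\alpha r\beta(t_i)(1-p_y)\left(1-(1-p_y)^{n-1}\right)$, and it reports $y$ with probability $p_y$. *)

(* Defs.v *)
From mathcomp Require Import all_boot all_order all_algebra.
Set Implicit Arguments. Unset Strict Implicit. Unset Printing Implicit Defensive.
Import Order.TTheory GRing.Theory Num.Theory.
Local Open Scope ring_scope.

Definition RefBar (R : realFieldType) (X : finType) (p p' : X -> R)
  (n : nat) (r alpha beta_t : R) : R :=
  alpha * beta_t * \sum_(x : X) p x *
    ((p' x / p x - 1 + r * p' x * (1 - p' x) / p x) * (1 - (1 - p x) ^+ n.-1)).

Definition EraBar (R : realFieldType) (X : finType) (p : X -> R)
  (n : nat) (r alpha beta_t : R) : R :=
  \sum_(y : X) p y * (alpha * r * beta_t * (1 - p y) * (1 - (1 - p y) ^+ n.-1)).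

(* Main.v *)
Require Import Defs.
From mathcomp Require Import all_boot all_order all_algebra.
From mathcomp Require Import ring lra.
Import Order.TTheory GRing.Theory Num.Theory.
Local Open Scope ring_scope.

Theorem lemma5 (R : realFieldType) (X : finType) (p p' : X -> R) (n : nat)
  (r alpha : R) (beta : R -> R) (t_i : R) (c_eH c_eL : R) :
  (2 <= n)%N ->
  (forall x, 0 < p x < 1) ->
  (forall x, 0 < p' x < 1) ->
  \sum_(x : X) p x = 1 ->
  0 <= r <= 1 ->
  0 < alpha ->
  (forall t, 0 < beta t) ->
  (forall s t, s < t -> beta t < beta s) ->
  c_eL < c_eH ->
  RefBar p p' n r alpha (beta t_i) - alpha * beta t_i >= c_eH - c_eL ->
  RefBar p p' n r alpha (beta t_i) - c_eH > EraBar p n r alpha (beta t_i) - c_eL.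
Proof.
move=> hn hp hp' hs /andP[r0 r1] ha hb _ _ hA.
set b := beta t_i.
have hb0 : 0 < b by exact: hb.
have hE : EraBar p n r alpha b =
  alpha * b * \sum_(y : X) p y * (r * (1 - p y) * (1 - (1 - p y) ^+ n.-1)).
  rewrite /EraBar mulr_sumr; apply: eq_bigr => y _; ring.
have hlt : \sum_(y : X) p y * (r * (1 - p y) * (1 - (1 - p y) ^+ n.-1))
           < \sum_(y : X) p y.
  apply: ltr_sum.
    have [x _|h] := pickP (@predT X); first by apply/hasP; exists x => //; rewrite mem_index_enum.
    move: hs; rewrite big_pred0 // => h1; move: (@oner_neq0 R); by rewrite h1 eqxx.
  move=> y _; have /andP[py0 py1] := hp y.
  set a := 1 - p y.
  have a0 : 0 <= a by rewrite /a; lra.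
  have a1 : a < 1 by rewrite /a; lra.
  have q0 : 0 <= a ^+ n.-1 by exact: exprn_ge0.
  have q1 : a ^+ n.-1 <= 1 by apply: exprn_ile1 => //; lra.
  have h1 : r * a <= a by nra.
  have ra0 : 0 <= r * a by exact: mulr_ge0.
  have h2 : r * a * (1 - a ^+ n.-1) <= r * a by rewrite -{2}(mulr1 (r * a)); apply: ler_wpM2l => //; lra.
  have h3 : r * a * (1 - a ^+ n.-1) < 1 by lra.
  nra.
rewrite hs in hlt.
have : alpha * b * \sum_(y : X) p y * (r * (1 - p y) * (1 - (1 - p y) ^+ n.-1))
       < alpha * b by rewrite -{2}(mulr1 (alpha * b)); rewrite ltr_pM2l //; exact: mulr_gt0.
rewrite -hE => hlt2; move: hA hlt2; set F := RefBar _ _ _ _ _ _; set E := EraBar _ _ _ _ _; set ab := alpha * b; move=> hA hlt2; lra.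
Qed.
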